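(* Let $(X,d)$, $\mathcal{R}$, $p$, $T$, $Y$ and $\lambda$ satisfy all hypotheses (1)–(4) of the following fixed point theorem: $(X,d)$ is a metric space, $\mathcal{R}$ a binary relation on $X$, $p$ a $w$-distance with respect to $\mathcal{R}$, $T:X\to X$, and (1) there is $Y\subseteq X$ with $T(X)\subseteq Y$ and $(Y,d)$ $\mathcal{R}$-complete; (2) $X(T,\mathcal{R})\ne\emptyset$ and $\mathcal{R}$ is $T$-closed; (3) $T$ is $\mathcal{R}$-continuous or $\mathcal{R}|_Y$ is $d$-self-closed; (4) there is $\lambda\in[0,1)$ with $p(Tx,Ty)\le\lambda p(x,y)$ whenever $(x,y)\in\mathcal{R}$. Suppose in addition that at least one of the following holds: (a) for every $x,y\in T(X)$ there exists $z\in T(X)$ such that $(z,x)\in\mathcal{R}$ and $(z,y)\in\mathcal{R}$; (b) $\mathcal{R}|_{T(X)}$ is complete, i.e. for all $x,y\in T(X)$, $(x,y)\in\mathcal{R}$ or $(y,x)\in\mathcal{R}$. Then $T$ has a unique fixed point.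
   Context: A sequence $(x_n)$ is $\mathcal{R}$-preserving if $(x_n,x_{n+1})\in\mathcal{R}$ for all $n\ge0$. $(Y,d)$ is $\mathcal{R}$-complete if every $\mathcal{R}$-preserving Cauchy sequence in $Y$ converges in $Y$. $X(T,\mathcal{R})=\{x\in X:(x,Tx)\in\mathcal{R}\}$. $\mathcal{R}$ is $T$-closed if $(x,y)\in\mathcal{R}\Rightarrow(Tx,Ty)\in\mathcal{R}$. $T$ is $\mathcal{R}$-continuous if $Tx_n\to Tx$ for every $\mathcal{R}$-preserving sequence $x_n\to x$. $\mathcal{R}|_Y=\mathcal{R}\cap(Y\times Y)$ is $d$-self-closed if every $\mathcal{R}|_Y$-preserving sequence $x_n\to x$ has a subsequence with $(x_{n_k},x)\in\mathcal{R}|_Y$ for all $k$. A function $g$ is $\mathcal{R}$-lower semi-continuous at $x$ if $\liminf_n g(x_n)\ge g(x)$ for every $\mathcal{R}$-preserving sequence $x_n\to x$. A $w$-distance with respect to $\mathcal{R}$ is $p:X\times X\to[0,\infty)$ with: (w1') $p(x,z)\le p(x,y)+p(y,z)$; (w2') each $p(x,\cdot)$ is $\mathcal{R}$-lower semi-continuous; (w3') for every $\epsilon>0$ there is $\delta>0$ such that $p(z,x)\le\delta$ and $p(z,y)\le\delta$ imply $d(x,y)\le\epsilon$. *)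

(* Defs.v *)
From Stdlib Require Import Reals.
Open Scope R_scope.

Definition is_metric {X : Type} (d : X -> X -> R) : Prop :=
  (forall x y, 0 <= d x y) /\
  (forall x y, d x y = 0 <-> x = y) /\
  (forall x y, d x y = d y x) /\
  (forall x y z, d x z <= d x y + d y z).

Definition converges {X : Type} (d : X -> X -> R) (u : nat -> X) (x : X) : Prop :=
  forall eps, 0 < eps -> exists N, forall n, (N <= n)%nat -> d (u n) x < eps.

Definition cauchy {X : Type} (d : X -> X -> R) (u : nat -> X) : Prop :=
  forall eps, 0 < eps -> exists N, forall m n, (N <= m)%nat -> (N <= n)%nat ->
    d (u m) (u n) < eps.

Definition R_preserving {X : Type} (Rel : X -> X -> Prop) (u : nat -> X) : Prop :=
  forall n, Rel (u n) (u (S n)).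

Definition rel_complete {X : Type} (d : X -> X -> R) (Rel : X -> X -> Prop)
  (Y : X -> Prop) : Prop :=
  forall u : nat -> X, (forall n, Y (u n)) -> R_preserving Rel u -> cauchy d u ->
    exists x, Y x /\ converges d u x.

Definition T_closed {X : Type} (Rel : X -> X -> Prop) (T : X -> X) : Prop :=
  forall x y, Rel x y -> Rel (T x) (T y).

Definition R_continuous {X : Type} (d : X -> X -> R) (Rel : X -> X -> Prop)
  (T : X -> X) : Prop :=
  forall (u : nat -> X) (x : X), R_preserving Rel u -> converges d u x ->
    converges d (fun n => T (u n)) (T x).

Definition restr {X : Type} (Rel : X -> X -> Prop) (Y : X -> Prop) : X -> X -> Prop :=
  fun x y => Rel x y /\ Y x /\ Y y.

Definition d_self_closed {X : Type} (d : X -> X -> R) (Rel : X -> X -> Prop)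
  (Y : X -> Prop) : Prop :=
  forall (u : nat -> X) (x : X), (forall n, Y (u n)) -> Y x ->
    R_preserving (restr Rel Y) u -> converges d u x ->
    exists phi : nat -> nat, (forall k, (phi k < phi (S k))%nat) /\
      forall k, restr Rel Y (u (phi k)) x.

(* g is R-lower semicontinuous at x: liminf g(x_n) >= g(x), written out with eps *)
Definition R_lsc_at {X : Type} (d : X -> X -> R) (Rel : X -> X -> Prop)
  (g : X -> R) (x : X) : Prop :=
  forall u : nat -> X, R_preserving Rel u -> converges d u x ->
    forall eps, 0 < eps -> exists N, forall n, (N <= n)%nat -> g x - eps < g (u n).

Definition w_distance {X : Type} (d : X -> X -> R) (Rel : X -> X -> Prop)
  (p : X -> X -> R) : Prop :=
  (forall x y, 0 <= p x y) /\
  (forall x y z, p x z <= p x y + p y z) /\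
  (forall x y, R_lsc_at d Rel (p x) y) /\
  (forall eps, 0 < eps -> exists delta, 0 < delta /\
     forall x y z, p z x <= delta -> p z y <= delta -> d x y <= eps).

(* Main.v *)
Require Import Defs.
From Stdlib Require Import Reals Lra Lia.
Open Scope R_scope.

Theorem theorem2p2 (X : Type) (d : X -> X -> R) (Rel : X -> X -> Prop)
  (p : X -> X -> R) (T : X -> X) (Y : X -> Prop) (lambda : R)
  (Hd : is_metric d) (Hp : w_distance d Rel p)
  (H1a : forall x, Y (T x)) (H1b : rel_complete d Rel Y)
  (H2a : exists x, Rel x (T x)) (H2b : T_closed Rel T)
  (H3 : R_continuous d Rel T \/ d_self_closed d Rel Y)
  (H4a : 0 <= lambda) (H4b : lambda < 1)
  (H4c : forall x y, Rel x y -> p (T x) (T y) <= lambda * p x y)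
  (Hab : (forall x y, (exists a, x = T a) -> (exists b, y = T b) ->
            exists z, (exists c, z = T c) /\ Rel z x /\ Rel z y)
         \/
         (forall x y, (exists a, x = T a) -> (exists b, y = T b) ->
            Rel x y \/ Rel y x)) :
  exists! x, T x = x.
Proof.
  destruct Hd as [dpos [deq [dsym dtri]]].
  destruct Hp as [ppos [ptri [plsc pw3]]].
  assert (Heq: forall a b, (forall delta, 0<delta -> exists z, p z a <= delta /\ p z b <= delta) -> a = b).
  { intros a b H. apply deq. destruct (Req_dec (d a b) 0) as [h|h]; auto. exfalso.
    set (e := d a b / 2). assert (he: 0 < e) by (pose proof (dpos a b); unfold e; lra).
    destruct (pw3 e he) as [dl [hdl Hw]]. destruct (H dl hdl) as [z [h1 h2]].
    pose proof (Hw a b z h1 h2). pose proof (dpos a b). unfold e in *; lra. }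
  assert (Hsmall: forall M, 0 <= M -> forall delta, 0 < delta -> exists N, forall n, (N <= n)%nat -> M * lambda^n <= delta).
  { intros M HM delta hd. destruct (pow_lt_1_zero lambda) with (y := delta/(M+1)) as [N HN].
    rewrite Rabs_right; lra. apply Rdiv_lt_0_compat; lra. exists N; intros n hn.
    specialize (HN n hn). rewrite Rabs_right in HN by (apply Rle_ge, pow_le; lra).
    apply Rmult_lt_compat_l with (r := M+1) in HN; [|lra].
    replace ((M+1)*(delta/(M+1))) with delta in HN by (field; lra).
    pose proof (pow_le lambda n H4a). nra. }
  assert (Huniq: forall a b, T a = a -> T b = b -> a = b).
  { intros a b Ha Hb. destruct Hab as [Hb1|Hb2].
    - destruct (Hb1 a b (ex_intro _ a (eq_sym Ha)) (ex_intro _ b (eq_sym Hb))) as [z [_ [Rza Rzb]]].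
      assert (Hr: forall w c, T c = c -> Rel w c -> forall n, Rel (Nat.iter n T w) c /\ p (Nat.iter n T w) c <= lambda^n * p w c).
      { intros w c Hc Rwc n. induction n as [|n IH].
        - simpl. split; [auto|lra].
        - destruct IH as [IH1 IH2]. simpl. rewrite <- Hc. split.
          + apply H2b; auto.
          + rewrite Hc. pose proof (H4c _ _ IH1). rewrite Hc in H.
            pose proof (ppos (Nat.iter n T w) c). nra. }
      apply Heq. intros delta hd.
      destruct (Hsmall (p z a + p z b)) with (delta := delta) as [N HN]; auto.
      pose proof (ppos z a); pose proof (ppos z b); lra.
      exists (Nat.iter N T z). destruct (Hr z a Ha Rza N) as [_ h1]. destruct (Hr z b Hb Rzb N) as [_ h2].
      specialize (HN N (le_n N)). pose proof (pow_le lambda N H4a).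
      pose proof (ppos z a); pose proof (ppos z b). split; nra.
    - assert (Hself: forall c, T c = c -> p c c = 0).
      { intros c Hc. destruct (Hb2 c c (ex_intro _ c (eq_sym Hc)) (ex_intro _ c (eq_sym Hc))) as [h|h];
        pose proof (H4c _ _ h) as h'; rewrite Hc in h'; pose proof (ppos c c); nra. }
      destruct (Hb2 a b (ex_intro _ a (eq_sym Ha)) (ex_intro _ b (eq_sym Hb))) as [h|h];
        pose proof (H4c _ _ h) as h'; rewrite Ha, Hb in h'.
      + apply Heq. intros delta hd. exists a. pose proof (ppos a b). rewrite (Hself a Ha). split; nra.
      + apply Heq. intros delta hd. exists b. pose proof (ppos b a). rewrite (Hself b Hb). split; nra. }
  destruct H2a as [x0 Hx0].
  set (x := fun n => Nat.iter n T x0).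
  assert (HxS: forall n, x (S n) = T (x n)) by reflexivity.
  assert (Hrel: forall n, Rel (x n) (x (S n))).
  { induction n as [|n IH]. exact Hx0. rewrite !HxS. apply H2b. rewrite <- HxS. exact IH. }
  set (c := p x0 (T x0)).
  assert (Hstep: forall n, p (x n) (x (S n)) <= lambda^n * c).
  { induction n as [|n IH]. simpl. unfold c; lra.
    pose proof (H4c _ _ (Hrel n)) as H.
    change (p (x (S n)) (x (S (S n))) <= lambda * lambda ^ n * c).
    rewrite (HxS (S n)), (HxS n). rewrite (HxS n) in IH, H.
    pose proof (ppos (x n) (T (x n))). nra. }
  set (M := c / (1 - lambda)).
  assert (Hc0: 0 <= c) by apply ppos.
  assert (HM: 0 <= M) by (unfold M; apply Rmult_le_pos; [lra| left; apply Rinv_0_lt_compat; lra]).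
  assert (HMc: M * (1 - lambda) = c) by (unfold M; field; lra).
  assert (Hseg: forall n k, p (x n) (x (n + S k)%nat) <= M * lambda^n - M * lambda^(n + S k)%nat).
  { intros n k. induction k as [|k IH].
    - rewrite Nat.add_1_r. pose proof (Hstep n) as Hs; rewrite HxS in Hs. simpl.
      assert (lambda^n * c = M*lambda^n - M*(lambda*lambda^n)) by (rewrite <- HMc; ring). lra.
    - rewrite (Nat.add_succ_r n (S k)).
      pose proof (ptri (x n) (x (n + S k)%nat) (x (S (n + S k)))).
      pose proof (Hstep (n + S k)%nat) as Hs; rewrite HxS in Hs; rewrite HxS. simpl.
      set (q := lambda ^ (n + S k)%nat) in *.
      assert (q * c = M*q - M*(lambda*q)) by (rewrite <- HMc; ring). rewrite !HxS in H. lra. }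
  assert (Hbound: forall n m, (n < m)%nat -> p (x n) (x m) <= M * lambda^n).
  { intros n m hnm. replace m with (n + S (m - n - 1))%nat by lia.
    pose proof (Hseg n (m - n - 1)%nat). pose proof (pow_le lambda (n + S (m - n - 1)) H4a). nra. }
  set (u := fun n => x (S n)).
  assert (Hu: forall n, Y (u n)) by (intro n; unfold u; rewrite HxS; apply H1a).
  assert (Hupres: R_preserving Rel u) by (intro n; apply Hrel).
  assert (Hcauchy: cauchy d u).
  { intros eps he. destruct (pw3 (eps/2)) as [dl [hdl Hw]]; [lra|].
    destruct (Hsmall M HM dl hdl) as [N HN]. exists N. intros m n hm hn.
    assert (h1: p (x N) (u m) <= dl) by (unfold u; eapply Rle_trans; [apply Hbound; lia| apply HN; lia]).
    assert (h2: p (x N) (u n) <= dl) by (unfold u; eapply Rle_trans; [apply Hbound; lia| apply HN; lia]).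
    pose proof (Hw _ _ _ h1 h2). lra. }
  destruct (H1b u Hu Hupres Hcauchy) as [z [Yz Hz]].
  assert (Hpz: forall n, p (x n) z <= M * lambda^n).
  { intros n. apply Rnot_lt_le. intro hlt. set (eps := p (x n) z - M * lambda^n).
    assert (he: 0 < eps) by (unfold eps; lra).
    destruct (plsc (x n) z u Hupres Hz eps he) as [N HN].
    specialize (HN (Nat.max N n) (Nat.le_max_l _ _)).
    pose proof (Hbound n (S (Nat.max N n)) ltac:(lia)). unfold u in HN. unfold eps in HN. lra. }
  assert (Hfix: T z = z).
  { destruct H3 as [Hcont|Hsc].
    - pose proof (Hcont u z Hupres Hz) as HT.
      destruct (Req_dec (d (T z) z) 0) as [h|h]; [apply deq; exact h|exfalso].
      pose proof (dpos (T z) z). set (e := d (T z) z / 2).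
      destruct (HT e) as [N1 HN1]; [unfold e; lra|].
      destruct (Hz e) as [N2 HN2]; [unfold e; lra|].
      specialize (HN1 (Nat.max N1 N2) (Nat.le_max_l _ _)).
      specialize (HN2 (S (Nat.max N1 N2)) ltac:(lia)).
      assert (E: T (u (Nat.max N1 N2)) = u (S (Nat.max N1 N2))) by reflexivity.
      rewrite E in HN1.
      pose proof (dtri (T z) (u (S (Nat.max N1 N2))) z).
      rewrite (dsym (T z) (u (S (Nat.max N1 N2)))) in H0. unfold e in *. lra.
    - destruct (Hsc u z Hu Yz) as [phi [Hphi Hr]]; auto.
      { intro n. split; [apply Hupres|split; apply Hu]. }
      assert (Hge: forall k, (k <= phi k)%nat).
      { induction k. lia. pose proof (Hphi k). lia. }
      apply Heq. intros delta hd. destruct (Hsmall M HM delta hd) as [N HN].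
      destruct (Hr N) as [Rn _].
      exists (T (u (phi N))). pose proof (H4c _ _ Rn) as h1.
      assert (E: T (u (phi N)) = x (S (S (phi N)))) by reflexivity.
      pose proof (Hpz (S (phi N))) as h2. pose proof (Hpz (S (S (phi N)))) as h3.
      pose proof (HN (S (phi N)) ltac:(specialize (Hge N); lia)) as h4.
      pose proof (HN (S (S (phi N))) ltac:(specialize (Hge N); lia)) as h5.
      unfold u in h1. change (p (T (x (S (phi N)))) (T z) <= lambda * p (x (S (phi N))) z) in h1. change (T (x (S (phi N))) = x (S (S (phi N)))) in E. rewrite <- E in h3.
      pose proof (ppos (x (S (phi N))) z). change (p (T (x (S (phi N)))) (T z) <= delta /\ p (T (x (S (phi N)))) z <= delta). pose proof (pow_le lambda (S (phi N)) H4a). assert (0 <= M * lambda ^ S (phi N)) by (apply Rmult_le_pos; auto). split; nra. }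
  exists z. split; [exact Hfix|]. intros y Hy. apply Huniq; auto.
Qed.
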